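(* Let $\alpha,\beta,\gamma,\Delta\in\mathbb{C}$ with $(\Delta,\beta)\neq(0,0)$. Consider extensions of conformal $\widetilde{\mathrm{SV}}$-modules $$0\to V(\alpha,\beta,\Delta)\to E\to\mathbb{C}c_\gamma\to0,$$ realized as $E=\mathbb{C}[\partial]v_\Delta\oplus\mathbb{C}c_\gamma$ (as vector spaces) with $\mathbb{C}[\partial]v_\Delta\cong V(\alpha,\beta,\Delta)$ a submodule and $$L_\lambda c_\gamma=f(\partial,\lambda)v_\Delta,\ M_\lambda c_\gamma=g(\partial,\lambda)v_\Delta,\ Y_\lambda c_\gamma=h(\partial,\lambda)v_\Delta,\ N_\lambda c_\gamma=k(\partial,\lambda)v_\Delta,\ \partial c_\gamma=\gamma c_\gamma+a(\partial)v_\Delta,$$ where $f,g,h,k\in\mathbb{C}[\partial,\lambda]$, $a\in\mathbb{C}[\partial]$. Nontrivial extensions of this form exist if and only if $\alpha+\gamma=0$, $\beta=0$ and $\Delta=1$. In this case $\dim_{\mathbb{C}}\mathrm{Ext}(\mathbb{C}c_{-\alpha},V(\alpha,0,1))=1$, and the only (up to a scalar) nontrivial extension is given by $g=h=k=0$ and $f(\partial,\lambda)=a(\partial)=a_0\in\mathbb{C}^*$.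
   Context: A conformal module over a Lie conformal algebra $R$ is a $\mathbb{C}[\partial]$-module $V$ with $a\mapsto a_\lambda\in\mathrm{End}_{\mathbb{C}}(V)\otimes\mathbb{C}[\lambda]$ satisfying $[a_\lambda,b_\mu]=[a_\lambda b]_{\lambda+\mu}$ and $(\partial a)_\lambda=[\partial,a_\lambda]=-\lambda a_\lambda$. $\widetilde{\mathrm{SV}}$ is the Lie conformal algebra that is the free $\mathbb{C}[\partial]$-module with basis $L,M,Y,N$ whose nonzero $\lambda$-brackets (up to skew-symmetry) are $[L_\lambda L]=(\partial+2\lambda)L$, $[L_\lambda Y]=(\partial+\tfrac32\lambda)Y$, $[L_\lambda M]=(\partial+\lambda)M$, $[Y_\lambda Y]=(\partial+2\lambda)M$, $[L_\lambda N]=(\partial+\lambda)N$, $[N_\lambda M]=2M$, $[N_\lambda Y]=Y$. $V(\alpha,\beta,\Delta)=\mathbb{C}[\partial]v_\Delta$ with $L_\lambda v_\Delta=(\partial+\alpha+\Delta\lambda)v_\Delta$, $N_\lambda v_\Delta=\beta v_\Delta$, $M_\lambda v_\Delta=Y_\lambda v_\Delta=0$. $\mathbb{C}c_\gamma$ is the one-dimensional module with $\partial c_\gamma=\gamma c_\gamma$ and zero $\lambda$-actions. An extension of $W$ by $V$ is an exact sequence $0\to V\to E\to W\to0$ of conformal modules; equivalence via a module map of middle terms compatible with identities; trivial means equivalent to the direct sum. $\mathrm{Ext}(W,V)$ is the space of extension cocycles modulo coboundaries. *)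

(* Defs.v *)
From HB Require Import structures.
From mathcomp Require Import all_boot all_order all_algebra.
From mathcomp Require Import complex.
From mathcomp Require Import Rstruct.
Set Implicit Arguments. Unset Strict Implicit. Unset Printing Implicit Defensive.
Import Order.TTheory GRing.Theory Num.Theory.
Local Open Scope ring_scope.

Definition C : fieldType := (complex.complex Rdefinitions.R).

Inductive gen := gL | gM | gY | gN.
Definition gens : seq gen := [:: gL; gM; gY; gN].

(* A bracket [x_lam y] = sum_z P_{xyz}(d, lam) z is
   encoded by the coefficient functions P_{xyz}(d, lam) (d = \partial).
   [listed_br x y] says that [x_lam y] is among the brackets given in the
   paper; the remaining ones are obtained by skew-symmetry
   [y_lam x] = - [x_{-lam-d} y], all others are zero. *)
Definition listed_br (x y : gen) : bool :=
  match x, y with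
  | gL, gL | gL, gY | gL, gM | gY, gY | gL, gN | gN, gM | gN, gY => true
  | _, _ => false
  end.

Definition base_br (x y z : gen) (d l : C) : C :=
  match x, y, z with
  | gL, gL, gL => d + 2%:R * l
  | gL, gY, gY => d + (3%:R / 2%:R) * l
  | gL, gM, gM => d + l
  | gY, gY, gM => d + 2%:R * l
  | gL, gN, gN => d + l
  | gN, gM, gM => 2%:R
  | gN, gY, gY => 1
  | _, _, _ => 0
  end.

Definition br (x y z : gen) (d l : C) : C :=
  if listed_br x y then base_br x y z d l
  else if listed_br y x then - base_br y x z d (- l - d)
  else 0.

(* The extension E = C[d] v_Delta (+) C c_gamma; an element p(d) v + t c is
   the pair (p, t). *)
Definition E := ({poly C} * C)%type.

(* The cocycle data (f, g, h, k, a): f, g, h, k in C[d, lam] are elements of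
   {poly {poly C}}: polynomials in lam (outer variable) with coefficients in
   C[d] (inner variable 'X); a in C[d]. *)
Record extdata := ExtData {
  ext_f : {poly {poly C}};
  ext_g : {poly {poly C}};
  ext_h : {poly {poly C}};
  ext_k : {poly {poly C}};
  ext_a : {poly C} }.

Definition cocyc (dt : extdata) (x : gen) : {poly {poly C}} :=
  match x with gL => ext_f dt | gM => ext_g dt | gY => ext_h dt | gN => ext_k dt end.

(* action of x_lam on v_Delta in V(alpha, beta, Delta) (coefficient of v) *)
Definition phiV (al be De : C) (x : gen) (l : C) : {poly C} :=
  match x with
  | gL => 'X + (al + De * l)%:P
  | gN => be%:P
  | _ => 0
  end.

Definition Dop (ga : C) (dt : extdata) (e : E) : E :=
  ('X * e.1 + e.2 *: ext_a dt, ga * e.2).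

(* the action of x_lam on E, evaluated at lam = l:
   x_lam (p(d) v + t c) = p(d + lam) x_lam v + t F_x(d, lam) v *)
Definition act (al be De : C) (dt : extdata) (x : gen) (l : C) (e : E) : E :=
  ((e.1 \Po ('X + l%:P)) * phiV al be De x l + e.2 *: (cocyc dt x).[l%:P], 0).

(* [x_lam y]_{lam+mu} acting on e: (q(d) z)_nu = q(-nu) z_nu *)
Definition bract (al be De : C) (dt : extdata) (x y : gen) (l m : C) (e : E) : E :=
  \sum_(z <- gens) br x y z (- (l + m)) l *: act al be De dt z (l + m) e.

(* E is a conformal SV~-module:
   [d, x_lam] = - lam x_lam  and  [x_lam, y_mu] = [x_lam y]_{lam+mu},
   as identities of operators on E, for all values lam = l, mu = m. *)
Definition is_ext (al be ga De : C) (dt : extdata) : Prop :=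
  (forall (x : gen) (l : C) (e : E),
      Dop ga dt (act al be De dt x l e) - act al be De dt x l (Dop ga dt e)
      = - (l *: act al be De dt x l e))
  /\ (forall (x y : gen) (l m : C) (e : E),
      act al be De dt x l (act al be De dt y m e)
        - act al be De dt y m (act al be De dt x l e)
      = bract al be De dt x y l m e).

Definition ext_equiv (al be ga De : C) (d1 d2 : extdata) : Prop :=
  exists Phi : E -> E,
    [/\ forall (s : C) (e1 e2 : E), Phi (s *: e1 + e2) = s *: Phi e1 + Phi e2,
        forall p : {poly C}, Phi (p, 0) = (p, 0),
        forall e : E, (Phi e).2 = e.2,
        forall e : E, Phi (Dop ga d1 e) = Dop ga d2 (Phi e)
      & forall (x : gen) (l : C) (e : E),
          Phi (act al be De d1 x l e) = act al be De d2 x l (Phi e)].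

(* the direct sum V(alpha,beta,Delta) (+) C c_gamma *)
Definition zero_ext : extdata := ExtData 0 0 0 0 0.

Definition ext_trivial (al be ga De : C) (dt : extdata) : Prop :=
  ext_equiv al be ga De dt zero_ext.

Definition std_ext (a0 : C) : extdata := ExtData (a0%:P)%:P 0 0 0 a0%:P.

(* Main.v *)
Require Import Defs.
From HB Require Import structures.
From mathcomp Require Import all_boot all_order all_algebra.
From mathcomp Require Import complex.
From mathcomp Require Import Rstruct.
From mathcomp Require Import ring.
Import Order.TTheory GRing.Theory Num.Theory.
Local Open Scope ring_scope.

Lemma pairE (u v : E) : u.1 = v.1 -> u.2 = v.2 -> u = v.
Proof. by case: u => ? ?; case: v => ? ? /= -> ->. Qed.

Ltac pnorm := rewrite -?mul_polyC ?(polyCD, polyCN, polyCM, polyCB).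

Lemma equiv_of al be ga De d1 d2 (q : {poly C}) :
  ext_a d1 - ext_a d2 = ('X - ga%:P) * q ->
  (forall x l, (cocyc d1 x).[l%:P] - (cocyc d2 x).[l%:P]
      = (q \Po ('X + l%:P)) * phiV al be De x l) ->
  ext_equiv al be ga De d1 d2.
Proof.
move=> Ha HF; exists (fun e => (e.1 + e.2 *: q, e.2)); split.
- move=> s [p1 t1] [p2 t2]; apply: pairE => /=; last by [].
  pnorm; ring.
- by move=> p /=; rewrite scale0r addr0.
- by [].
- move=> [p t]; apply: pairE => //=.
  move/eqP: Ha; rewrite subr_eq => /eqP ->.
  pnorm; ring.
- move=> x l [p t]; apply: pairE => //=.
  move/eqP: (HF x l); rewrite subr_eq => /eqP ->.
  rewrite scale0r addr0 comp_polyD comp_polyZ.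
  pnorm; ring.
Qed.

Lemma deq al be ga De dt : is_ext al be ga De dt -> forall x l,
  ('X + (l - ga)%:P) * (cocyc dt x).[l%:P]
   = (ext_a dt \Po ('X + l%:P)) * phiV al be De x l.
Proof.
move=> [H _] x l.
have := congr1 fst (H x l (0,1)).
rewrite /= comp_poly0 mul0r add0r scale1r mulr1 scale0r addr0 => h.
rewrite mulr0 add0r scale1r in h.
move/eqP: h; rewrite -subr_eq0 => /eqP h.
apply/eqP; rewrite -subr_eq0; apply/eqP; rewrite -h; pnorm; ring.
Qed.

Lemma XaddC_neq0 (c : C) : ('X + c%:P : {poly C}) != 0.
Proof. by rewrite monic_neq0 // monicXaddC. Qed.

Lemma classify al be ga De dt : is_ext al be ga De dt ->
  exists a0 : C, ext_equiv al be ga De dt (std_ext a0)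
     /\ (a0 != 0 -> [/\ al + ga = 0, be = 0 & De = 1]).
Proof.
move=> Hext.
set a := ext_a dt. set a0 := a.[ga].
have /factor_theorem [q Hq] : root (a - a0%:P) ga
  by rewrite /root hornerD hornerN hornerC subrr.
have key : forall x l, ('X + (l - ga)%:P) *
   ((cocyc dt x).[l%:P] - (q \Po ('X + l%:P)) * phiV al be De x l)
   = a0%:P * phiV al be De x l.
{ move=> x l.
  have ha : a \Po ('X + l%:P)
     = (q \Po ('X + l%:P)) * ('X + (l-ga)%:P) + a0%:P.
  { rewrite -{1}(subrK a0%:P a) Hq comp_polyD comp_polyM comp_polyB comp_polyX.
    rewrite !comp_polyC; pnorm; ring. }
  rewrite mulrBr (@deq _ _ _ _ _ Hext) ha; pnorm; ring. }
have ev : forall c (P Q : {poly C}), ('X + c%:P) * P = Q -> Q.[-c] = 0.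
{ by move=> c P Q <-; rewrite hornerM hornerD hornerX hornerC addNr mul0r. }
have canc : forall c (P Q : {poly C}),
    ('X + c%:P) * P = ('X + c%:P) * Q -> P = Q.
{ by move=> c P Q; apply: mulfI; apply: XaddC_neq0. }
have conds : a0 != 0 -> [/\ al + ga = 0, be = 0 & De = 1].
{ move=> a0n0.
  have hL l : ga - l + (al + De * l) = 0.
  { have := ev _ _ _ (key gL l).
    rewrite /= hornerM hornerC hornerD hornerX hornerC => /eqP.
    by rewrite mulf_eq0 (negbTE a0n0) /= opprB => /eqP. }
  have h0 := hL 0; have h1 := hL 1.
  rewrite mulr0 addr0 subr0 in h0; rewrite mulr1 in h1.
  split.
  - by rewrite addrC.
  - have := ev _ _ _ (key gN 0).
    rewrite /= hornerM !hornerC => /eqP.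
    by rewrite mulf_eq0 (negbTE a0n0) /= => /eqP.
  - have -> : De = (ga - 1 + (al + De)) - (ga + al) + 1 by ring.
    by rewrite h1 h0 subr0 add0r. }
exists a0; split => //.
apply: (@equiv_of _ _ _ _ _ _ q).
- by rewrite /= Hq mulrC.
- move=> x l; apply/eqP; rewrite subr_eq addrC -subr_eq; apply/eqP.
  apply: (canc (l - ga)); rewrite key.
  case: x => /=.
  + rewrite hornerC.
    case: (eqVneq a0 0) => [->|/conds [h1 h2 h3]].
      by rewrite polyC0 !(mul0r, mulr0).
    rewrite h3 mul1r.
    have -> : al = - ga by apply/eqP; rewrite -subr_eq0 opprK h1.
    pnorm; ring.
  + by rewrite horner0 !mulr0.
  + by rewrite horner0 !mulr0.
  + rewrite horner0 mulr0.
    case: (eqVneq a0 0) => [->|/conds [h1 h2 h3]].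
      by rewrite polyC0 mul0r.
    by rewrite h2 polyC0 mulr0.
Qed.
Lemma compXC (p : {poly C}) l m :
  (p \Po ('X + m%:P)) \Po ('X + l%:P) = p \Po ('X + (l + m)%:P).
Proof. by rewrite -comp_polyA comp_polyD comp_polyX comp_polyC polyCD addrA. Qed.

Lemma std_is_ext al a0 : is_ext al 0 (-al) 1 (std_ext a0).
Proof.
split.
- move=> x l [p t]; apply: pairE => /=; last by rewrite ?mulr0 ?scaler0 ?subr0 ?oppr0.
  case: x => /=; rewrite ?comp_polyD ?comp_polyM ?comp_polyZ ?comp_polyX ?comp_polyC ?hornerC ?horner0; pnorm; ring.
- move=> x y l m [p t]; rewrite /bract /gens !big_cons big_nil.
  apply: pairE => /=.
  + case: x; case: y => /=.
    all: rewrite /br /= ?hornerC ?horner0 ?(mulr0, scaler0, scale0r, addr0, add0r, polyC0, mul1r, mul0r, subr0, subrr).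
    all: rewrite ?comp_polyD ?comp_polyM ?comp_polyZ ?compXC ?comp_polyX ?comp_polyC ?comp_poly0.
    all: rewrite ?comp_polyD ?comp_polyX ?comp_polyC ?(addrC m l).
    all: pnorm.
    all: ring.
Qed.
Lemma std_nontriv al be ga De (a0 : C) : a0 != 0 ->
  ~ ext_trivial al be ga De (std_ext a0).
Proof.
move=> a0n0 [Phi [Hlin Hp H2 HD Hact]].
have e1 : ((a0%:P, ga) : E) = ga *: ((0 : {poly C}), 1) + (a0%:P, 0).
  apply: pairE => /=; first by rewrite scaler0 add0r.
  by rewrite addr0 [_%:A]mulr1.
set q := (Phi (0, 1)).1.
have P01 : Phi (0, 1) = (q, 1) by apply: pairE; rewrite // H2.
have := congr1 fst (HD (0, 1)).
rewrite /Dop /= mulr0 add0r scale1r mulr1 e1 Hlin Hp P01 /=.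
move/(congr1 (horner^~ ga)).
rewrite !hornerE.
move/eqP; rewrite -subr_eq0 addrC addKr => /eqP h.
by move: a0n0; rewrite h eqxx.
Qed.

Theorem theorem5p4 (al be ga De : C) :
  (De, be) != (0, 0) ->
  ((exists dt : extdata, is_ext al be ga De dt /\ ~ ext_trivial al be ga De dt)
     <-> [/\ al + ga = 0, be = 0 & De = 1])
  /\ (al + ga = 0 -> be = 0 -> De = 1 ->
      (forall a0 : C, a0 != 0 ->
          is_ext al be ga De (std_ext a0) /\ ~ ext_trivial al be ga De (std_ext a0))
      /\ (forall dt : extdata, is_ext al be ga De dt ->
          exists a0 : C, ext_equiv al be ga De dt (std_ext a0))).
Proof.
move=> _.
have gaE : al + ga = 0 -> ga = - al.
  by move=> h; apply/eqP; rewrite -subr_eq0 opprK addrC h.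
have std0 : std_ext 0 = zero_ext by rewrite /std_ext !polyC0.
split; [split|].
- move=> [dt [Hext Hnt]].
  have [a0 [Heq Hc]] := @classify _ _ _ _ _ Hext.
  case: (eqVneq a0 0) => [a00|/Hc //].
  by exfalso; apply: Hnt; move: Heq; rewrite a00 std0.
- move=> [h1 h2 h3]; exists (std_ext 1); split.
    by rewrite (gaE h1) h2 h3; apply: std_is_ext.
  by apply: std_nontriv; apply: oner_neq0.
- move=> h1 h2 h3; split.
  + move=> a0 a0n0; split; last exact: std_nontriv.
    by rewrite (gaE h1) h2 h3; apply: std_is_ext.
  + move=> dt Hext.
    have [a0 [Heq _]] := @classify _ _ _ _ _ Hext.
    by exists a0.
Qed.
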